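(* Let $S=\Sigma^*$ be the free monoid over an alphabet $\Sigma$. Then: (1) $[1,1]=\rho_1$; (2) $[1,[1,1]]=0$ (so $S$ is left $2$-nilpotent); (3) if $|\Sigma|\le2$, then $\rho_2=[[1,1],1]=[1,1,1]$ and $\rho_2$ is cancellative; if $|\Sigma|\ge3$, then $\rho_2$ is not cancellative; (4) $S$ is right nilpotent if and only if $|\Sigma|\le1$.
   Context: $q_1(x,y,z)=xy$, $q_{k+1}(x,y,z)=q_k(x,y,z)\,z_k\,q_k(y,x,z)$ for $z=(z_1,z_2,\dots)$; $\rho_n$ is the congruence of $S$ generated by all pairs $(q_n(x,y,z),q_n(y,x,z))$ with $x,y\in S$, $z\in S^{\mathbb N}$ (so $\rho_1$ is generated by $(xy,yx)$, $\rho_2$ by $(xyz_1yx,yxz_1xy)$). A congruence $\sigma$ is cancellative if $S/\sigma$ is cancellative. Commutators are those of the semigroup $(S,\cdot)$: for congruences $\alpha_1,\dots,\alpha_k$, $M(\alpha_1,\dots,\alpha_k)$ is the subsemigroup of $S^{\{0,1\}^k}$ generated by all $g$ such that for some $i$ and $(a,b)\in\alpha_i$, $g(x)=a$ if $x_i=0$ and $g(x)=b$ if $x_i=1$; $[\alpha_1,\dots,\alpha_k]$ is the smallest congruence $\delta$ such that for all $f\in M(\alpha_1,\dots,\alpha_k)$: if $(f(x0),f(x1))\in\delta$ for all $x\in\{0,1\}^{k-1}\setminus\{(1,\dots,1)\}$ then $(f(1,\dots,1,0),f(1,\dots,1,1))\in\delta$. $1$ is the total and $0$ the trivial congruence; $[1)^1=1$,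 $[1)^{j+1}=[[1)^j,1]$; $S$ is right nilpotent if $[1)^{d+1}=0$ for some $d\in\mathbb N$. *)

(* Defs.v *)
From mathcomp Require Import all_boot.
Set Implicit Arguments. Unset Strict Implicit. Unset Printing Implicit Defensive.

Definition prel (T : Type) := T -> T -> Prop.

Definition releq T (a b : prel T) : Prop := forall x y, a x y <-> b x y.

Section Semigroup.
Variables (T : Type) (op : T -> T -> T).

Definition congruence (r : prel T) : Prop :=
  [/\ (forall x, r x x), (forall x y, r x y -> r y x),
      (forall x y z, r x y -> r y z -> r x z) &
      (forall x y u v, r x y -> r u v -> r (op x u) (op y v))].

Definition cong_gen (R : prel T) : prel T :=
  fun x y => forall th, congruence th -> (forall a b, R a b -> th a b) -> th x y.

Definition total_cong : prel T := fun _ _ => True.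
Definition triv_cong : prel T := fun x y => x = y.

(* S/sigma is cancellative (left and right) *)
Definition cancellative (s : prel T) : Prop :=
  (forall x y z, s (op x z) (op y z) -> s x y) /\
  (forall x y z, s (op z x) (op z y) -> s x y).

(* M(alpha_1, ..., alpha_k): subsemigroup of T^({0,1}^k) generated by the
   generators; {0,1}^k is represented by functions 'I_k -> bool. *)
Inductive inM (k : nat) (als : 'I_k -> prel T) : (('I_k -> bool) -> T) -> Prop :=
  | inM_gen (i : 'I_k) (a b : T) :
      als i a b -> inM als (fun x => if x i then b else a)
  | inM_mul (f g : ('I_k -> bool) -> T) :
      inM als f -> inM als g -> inM als (fun x => op (f x) (g x)).

(* (x, b) : the tuple in {0,1}^(n+1) whose first n coordinates are x and last is b *)
Definition ext (n : nat) (x : 'I_n -> bool) (b : bool) : 'I_n.+1 -> bool :=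
  fun i => match unlift ord_max i with Some j => x j | None => b end.

Definition comm_closed (n : nat) (als : 'I_n.+1 -> prel T) (d : prel T) : Prop :=
  forall f, inM als f ->
    (forall x : 'I_n -> bool, (exists j, x j = false) ->
        d (f (ext x false)) (f (ext x true))) ->
    d (f (ext (fun _ => true) false)) (f (ext (fun _ => true) true)).

(* [alpha_1, ..., alpha_(n+1)]: the smallest congruence with the property *)
Definition commutator (n : nat) (als : 'I_n.+1 -> prel T) : prel T :=
  fun x y => forall d, congruence d -> comm_closed als d -> d x y.

Definition comm2 (a b : prel T) : prel T :=
  @commutator 1 (fun i => nth a [:: a; b] i).

Definition comm3 (a b c : prel T) : prel T :=
  @commutator 2 (fun i => nth a [:: a; b; c] i).

(* q_{n+1}(x,y,z) *)
Fixpoint qq (n : nat) (x y : T) (z : nat -> T) : T :=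
  match n with
  | 0 => op x y
  | n'.+1 => op (op (qq n' x y z) (z n)) (qq n' y x z)
  end.

(* rho_n for n >= 1 *)
Definition rho (n : nat) : prel T :=
  cong_gen (fun a b => exists x y (z : nat -> T),
               a = qq n.-1 x y z /\ b = qq n.-1 y x z).

(* rpow j = [1)^(j+1) *)
Fixpoint rpow (j : nat) : prel T :=
  match j with
  | 0 => total_cong
  | j'.+1 => comm2 (rpow j') total_cong
  end.

Definition right_nilpotent : Prop := exists d : nat, releq (rpow d) triv_cong.

End Semigroup.

Definition card_le (A : Type) (n : nat) : Prop := exists f : A -> 'I_n, injective f.
Definition card_ge (A : Type) (n : nat) : Prop := exists f : 'I_n -> A, injective f.

(* Main.v *)
Require Import Defs.
From mathcomp Require Import all_boot.
From Stdlib Require Import Permutation Lia Classical ClassicalEpsilon FunctionalExtensionality.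
From mathcomp Require Import zify.
Set Implicit Arguments. Unset Strict Implicit. Unset Printing Implicit Defensive.

Lemma cong_gen_cong {T : Type} (op : T -> T -> T) (R : prel T) :
  congruence op (cong_gen op R).
Proof.
split.
- by move=> x th [Hr _ _ _] _; apply: Hr.
- by move=> x y H th Hth HR; case: (Hth) => _ Hs _ _; apply: Hs; apply: H.
- move=> x y z H1 H2 th Hth HR; case: (Hth) => _ _ Ht _.
  by apply: (Ht _ y); [apply: H1|apply: H2].
- move=> x y u v H1 H2 th Hth HR; case: (Hth) => _ _ _ Hc.
  by apply: Hc; [apply: H1|apply: H2].
Qed.

Lemma cong_gen_min {T : Type} (op : T -> T -> T) (R th : prel T) :
  congruence op th -> (forall a b, R a b -> th a b) ->
  forall x y, cong_gen op R x y -> th x y.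
Proof. by move=> Hc HR x y H; apply: H. Qed.

Lemma cong_gen_in {T : Type} (op : T -> T -> T) (R : prel T) a b :
  R a b -> cong_gen op R a b.
Proof. by move=> H th _ HR; apply: HR. Qed.

Lemma commutator_cong {T : Type} (op : T -> T -> T) n (als : 'I_n.+1 -> prel T) :
  congruence op (commutator op als).
Proof.
split.
- by move=> x d [Hr _ _ _] _; apply: Hr.
- by move=> x y H d Hd Hc; case: (Hd) => _ Hs _ _; apply: Hs; apply: H.
- move=> x y z H1 H2 d Hd Hc; case: (Hd) => _ _ Ht _.
  by apply: (Ht _ y); [apply: H1|apply: H2].
- move=> x y u v H1 H2 d Hd Hc; case: (Hd) => _ _ _ Hm.
  by apply: Hm; [apply: H1|apply: H2].
Qed.

Lemma commutator_min {T : Type} (op : T -> T -> T) n (als : 'I_n.+1 -> prel T) d :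
  congruence op d -> comm_closed op als d -> forall x y, commutator op als x y -> d x y.
Proof. by move=> Hd Hc x y H; apply: H. Qed.

Lemma commutator_refl {T : Type} (op : T -> T -> T) n (als : 'I_n.+1 -> prel T) x :
  commutator op als x x.
Proof. by case: (commutator_cong op als). Qed.

Lemma ext_max n (x : 'I_n -> bool) b : ext x b ord_max = b.
Proof. by rewrite /ext unlift_none. Qed.

Lemma ext_lift n (x : 'I_n -> bool) b j : ext x b (lift ord_max j) = x j.
Proof. by rewrite /ext liftK. Qed.

Definition evg {T : Type} k (y : 'I_k -> bool) (g : 'I_k * (T * T)) : T :=
  if y g.1 then g.2.2 else g.2.1.
Definition FL {S : Type} k (L : seq ('I_k * (seq S * seq S))) y : seq S :=
  flatten (map (evg y) L).

Lemma FL_cons {S : Type} k g (L : seq ('I_k * (seq S * seq S))) y :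
  FL (g :: L) y = evg y g ++ FL L y.
Proof. by []. Qed.

Lemma inM_dec {S : Type} k (als : 'I_k -> prel (seq S)) f :
  inM (@cat S) als f -> exists L : seq ('I_k * (seq S * seq S)),
    (forall g, List.In g L -> als g.1 g.2.1 g.2.2) /\ forall y, f y = FL L y.
Proof.
induction 1 as [i a b H|f1 g1 _ [L1 [H1 E1]] _ [L2 [H2 E2]]].
  exists [:: (i, (a, b))]; split; first by move=> g [<-|[]].
  by move=> y; rewrite /FL /= cats0.
exists (L1 ++ L2); split.
  by move=> g Hg; case: (List.in_app_or _ _ _ Hg) => ?; [apply: H1|apply: H2].
by move=> y; rewrite /FL map_cat flatten_cat E1 E2.
Qed.
Definition c0 : 'I_2 := lift ord_max ord0.
Definition c1 : 'I_2 := ord_max.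
Lemma I2cases (i : 'I_2) : i = c0 \/ i = c1.
Proof.
case: (unliftP ord_max i) => [j ->|->]; last by right.
by left; rewrite (ord1 j).
Qed.
Definition e0 : 'I_3 := lift ord_max ord0.
Definition e1 : 'I_3 := lift ord_max ord_max.
Definition e2 : 'I_3 := ord_max.
Lemma I2cases' (j : 'I_2) : j = ord0 \/ j = ord_max.
Proof. by case: j => [[|[|//]] Hj]; [left|right]; apply: val_inj. Qed.
Lemma I3cases (i : 'I_3) : [\/ i = e0, i = e1 | i = e2].
Proof.
case: (unliftP ord_max i) => [j ->|->]; last by constructor 3.
by case: (I2cases' j) => ->; [constructor 1|constructor 2].
Qed.

Definition pt2 (p q : bool) : 'I_2 -> bool := fun i => if i == c0 then p else q.
Definition pt3 (p q r : bool) : 'I_3 -> bool :=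
  fun i => if i == e0 then p else if i == e1 then q else r.

Lemma FL_ext {S : Type} k (L : seq ('I_k * (seq S * seq S))) y y' :
  y =1 y' -> FL L y = FL L y'.
Proof. by move=> E; rewrite /FL; congr flatten; apply: eq_map => g; rewrite /evg E. Qed.

Lemma ext_pt2 (x : 'I_1 -> bool) b : ext x b =1 pt2 (x ord0) b.
Proof.
move=> i; case: (I2cases i) => ->; rewrite /pt2 /=.
  by rewrite /c0 ext_lift.
by rewrite /c1 ext_max.
Qed.

Lemma ext_pt3 (x : 'I_2 -> bool) b : ext x b =1 pt3 (x ord0) (x ord_max) b.
Proof.
move=> i; case: (I3cases i) => ->; rewrite /pt3 /=.
- by rewrite /e0 ext_lift.
- by rewrite /e1 ext_lift.
- by rewrite /e2 ext_max.
Qed.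

Lemma cc2 {S : Type} (als : 'I_2 -> prel (seq S)) (d : prel (seq S)) :
  (forall L : seq ('I_2 * (seq S * seq S)),
      (forall g, List.In g L -> als g.1 g.2.1 g.2.2) ->
      d (FL L (pt2 false false)) (FL L (pt2 false true)) ->
      d (FL L (pt2 true false)) (FL L (pt2 true true))) ->
  comm_closed (@cat S) als d.
Proof.
move=> H f Hf Hx; case: (inM_dec Hf) => L [HL E].
have := Hx (fun _ => false) (ex_intro _ ord0 erefl).
rewrite !E !(FL_ext L (ext_pt2 _ _)) => /(H L HL).
by [].
Qed.

Lemma cc3 {S : Type} (als : 'I_3 -> prel (seq S)) (d : prel (seq S)) :
  (forall L : seq ('I_3 * (seq S * seq S)),
      (forall g, List.In g L -> als g.1 g.2.1 g.2.2) ->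
      d (FL L (pt3 false false false)) (FL L (pt3 false false true)) ->
      d (FL L (pt3 false true false)) (FL L (pt3 false true true)) ->
      d (FL L (pt3 true false false)) (FL L (pt3 true false true)) ->
      d (FL L (pt3 true true false)) (FL L (pt3 true true true))) ->
  comm_closed (@cat S) als d.
Proof.
move=> H f Hf Hx; case: (inM_dec Hf) => L [HL E].
pose xx (p q : bool) : 'I_2 -> bool := fun j => if j == ord0 then p else q.
have Hxx p q : p = false \/ q = false ->
    d (FL L (pt3 p q false)) (FL L (pt3 p q true)).
  move=> Hpq; have := Hx (xx p q).
  rewrite !E !(FL_ext L (ext_pt3 _ _)) /xx /=; apply.
  by case: Hpq => Hpq; [exists ord0|exists ord_max].
rewrite !E !(FL_ext L (ext_pt3 _ _)) /=.
by apply: H => //; apply: Hxx; auto.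
Qed.

Lemma sep2count {S : Type} (P : pred S) (L : seq ('I_2 * (seq S * seq S))) :
  exists X Y : bool -> nat, forall y, count P (FL L y) = X (y c0) + Y (y c1).
Proof.
elim: L => [|[i [a b]] L [X [Y IH]]]; first by exists (fun _ => 0), (fun _ => 0).
case: (I2cases i) => ->.
  exists (fun p => count P (if p then b else a) + X p), Y => y.
  by rewrite FL_cons count_cat IH /evg /=; lia.
exists X, (fun p => count P (if p then b else a) + Y p) => y.
by rewrite FL_cons count_cat IH /evg /=; lia.
Qed.

Lemma sep3count {S : Type} (P : pred S) (L : seq ('I_3 * (seq S * seq S))) :
  exists X Y Z : bool -> nat, forall y,
    count P (FL L y) = X (y e0) + Y (y e1) + Z (y e2).
Proof.
elim: L => [|[i [a b]] L [X [Y [Z IH]]]].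
  by exists (fun _ => 0), (fun _ => 0), (fun _ => 0).
case: (I3cases i) => ->.
- exists (fun p => count P (if p then b else a) + X p), Y, Z => y.
  by rewrite FL_cons count_cat IH /evg /=; lia.
- exists X, (fun p => count P (if p then b else a) + Y p), Z => y.
  by rewrite FL_cons count_cat IH /evg /=; lia.
- exists X, Y, (fun p => count P (if p then b else a) + Z p) => y.
  by rewrite FL_cons count_cat IH /evg /=; lia.
Qed.

Lemma Perm_cong {S : Type} : congruence (@cat S) (@Permutation S).
Proof.
split.
- by move=> x; apply: Permutation_refl.
- by move=> x y; apply: Permutation_sym.
- by move=> x y z; apply: Permutation_trans.
- by move=> x y u v; apply: Permutation_app.
Qed.

Definition FL0 {S : Type} (L : seq ('I_2 * (seq S * seq S))) p :=
  FL (filter (fun g => g.1 == c0) L) (fun _ => p).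
Definition FL1 {S : Type} (L : seq ('I_2 * (seq S * seq S))) q :=
  FL (filter (fun g => g.1 != c0) L) (fun _ => q).

Lemma FL_perm {S : Type} (L : seq ('I_2 * (seq S * seq S))) y :
  Permutation (FL L y) (FL0 L (y c0) ++ FL1 L (y c1)).
Proof.
elim: L => [|[i [a b]] L IH] //=.
rewrite /FL0 /FL1 FL_cons /=.
case: (I2cases i) => ->.
  rewrite eqxx /= FL_cons -catA; apply: Permutation_app_head.
  by rewrite /evg /=.
have -> : (c1 == c0) = false by [].
rewrite /= FL_cons /evg /=.
apply: (Permutation_trans (Permutation_app_head _ IH)).
exact: Permutation_app_swap_app.
Qed.

Lemma Perm_closed {S : Type} (a0 b0 : prel (seq S)) :
  comm_closed (@cat S) (fun i : 'I_2 => nth a0 [:: a0; b0] i) (@Permutation S).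
Proof.
apply: cc2 => L _ H.
have P1 := FL_perm L (pt2 false false); have P2 := FL_perm L (pt2 false true).
have P3 := FL_perm L (pt2 true false); have P4 := FL_perm L (pt2 true true).
rewrite /pt2 /= in P1 P2 P3 P4.
have H' : Permutation (FL1 L false) (FL1 L true).
  apply: (Permutation_app_inv_l (FL0 L false)).
  apply: (Permutation_trans (Permutation_sym P1)).
  by apply: (Permutation_trans H).
apply: (Permutation_trans P3); apply: (Permutation_trans _ (Permutation_sym P4)).
exact: Permutation_app_head.
Qed.
Lemma inM_FL {S : Type} k (als : 'I_k -> prel (seq S)) g (L : seq ('I_k * (seq S * seq S))) :
  (forall h, List.In h (g :: L) -> als h.1 h.2.1 h.2.2) -> inM (@cat S) als (FL (g :: L)).
Proof.
elim: L g => [|h L IH] g HL.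
  have -> : FL [:: g] = (fun y => if y g.1 then g.2.2 else g.2.1).
    by apply: functional_extensionality => y; rewrite /FL /= cats0.
  by apply: inM_gen; apply: HL; left.
apply: (@inM_mul _ _ _ _ (fun y => if y g.1 then g.2.2 else g.2.1) (FL (h :: L))).
  by apply: inM_gen; apply: HL; left.
by apply: IH => h' Hh; apply: HL; right.
Qed.

Lemma comm2_pair {S : Type} (als : 'I_2 -> prel (seq S)) g L :
  (forall h, List.In h (g :: L) -> als h.1 h.2.1 h.2.2) ->
  FL (g :: L) (pt2 false false) = FL (g :: L) (pt2 false true) ->
  commutator (@cat S) als (FL (g :: L) (pt2 true false)) (FL (g :: L) (pt2 true true)).
Proof.
move=> HL E d Hd Hc; have := Hc _ (inM_FL HL).
rewrite !(FL_ext _ (ext_pt2 _ _)); apply.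
move=> x [j Hj]; rewrite (ord1 j) in Hj.
rewrite !(FL_ext _ (ext_pt2 _ _)) Hj E.
by case: Hd.
Qed.

Lemma comm3_pair {S : Type} (als : 'I_3 -> prel (seq S)) g L :
  (forall h, List.In h (g :: L) -> als h.1 h.2.1 h.2.2) ->
  FL (g :: L) (pt3 false false false) = FL (g :: L) (pt3 false false true) ->
  FL (g :: L) (pt3 false true false) = FL (g :: L) (pt3 false true true) ->
  FL (g :: L) (pt3 true false false) = FL (g :: L) (pt3 true false true) ->
  commutator (@cat S) als (FL (g :: L) (pt3 true true false)) (FL (g :: L) (pt3 true true true)).
Proof.
move=> HL E1 E2 E3 d Hd Hc; have := Hc _ (inM_FL HL).
rewrite !(FL_ext _ (ext_pt3 _ _)); apply.
move=> x [j Hj]; rewrite !(FL_ext _ (ext_pt3 _ _)).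
case: (I2cases' j) Hj => -> ->; case: (x _);
  rewrite ?E1 ?E2 ?E3; by case: Hd.
Qed.

Lemma gen_comm11 {S : Type} (a0 b0 : prel (seq S)) (x y : seq S) :
  (forall u v, a0 u v) -> (forall u v, b0 u v) ->
  commutator (@cat S) (fun i : 'I_2 => nth a0 [:: a0; b0] i) (x ++ y) (y ++ x).
Proof.
move=> Ha Hb.
have := @comm2_pair S (fun i : 'I_2 => nth a0 [:: a0; b0] i)
  (c1, ([::], y)) [:: (c0, ([::], x)); (c1, (y, [::]))].
rewrite /FL /evg /pt2 /= !cats0; apply => //.
by move=> h [<-|[<-|[<-|[]]]] /=.
Qed.

Lemma Perm_rho1 {S : Type} (u v : seq S) : Permutation u v -> rho (@cat S) 1 u v.
Proof.
have [Hr Hs Ht Hc] := cong_gen_cong (@cat S)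
  (fun a b => exists x y (z : nat -> seq S), a = qq (@cat S) 0 x y z /\ b = qq (@cat S) 0 y x z).
elim=> [|x l l' _ IH|x y l|l l' l'' _ IH1 _ IH2].
- exact: Hr.
- by apply: (Hc [:: x] [:: x] l l') => //; apply: Hr.
- apply: (Hc [:: y; x] [:: x; y] l l); last exact: Hr.
  by apply: cong_gen_in; exists [:: y], [:: x], (fun _ => [::]).
- exact: Ht IH1 IH2.
Qed.

Lemma comm11_perm {S : Type} (u v : seq S) :
  comm2 (@cat S) (@total_cong _) (@total_cong _) u v -> Permutation u v.
Proof. by apply: commutator_min; [apply: Perm_cong|apply: Perm_closed]. Qed.

Lemma part1 {S : Type} :
  releq (comm2 (@cat S) (@total_cong _) (@total_cong _)) (rho (@cat S) 1).
Proof.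
move=> u v; split.
  by move/comm11_perm; apply: Perm_rho1.
apply: cong_gen_min; first exact: commutator_cong.
move=> a b [x [y [z [-> ->]]]] /=.
exact: gen_comm11.
Qed.

Lemma cat_inj_size {S : Type} (s1 s2 s3 s4 : seq S) :
  size s1 = size s2 -> s1 ++ s3 = s2 ++ s4 -> s1 = s2 /\ s3 = s4.
Proof.
move=> Hs E; split.
  by have := congr1 (take (size s1)) E; rewrite take_size_cat // Hs take_size_cat.
by have := congr1 (drop (size s1)) E; rewrite drop_size_cat // Hs drop_size_cat.
Qed.

Lemma eq_cong {S : Type} : congruence (@cat S) (fun x y => x = y).
Proof. by split=> // [x y z -> ->|x y u v -> ->]. Qed.

Lemma part2 {S : Type} :
  releq (comm2 (@cat S) (@total_cong _) (comm2 (@cat S) (@total_cong _) (@total_cong _))) (@triv_cong (seq S)).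
Proof.
move=> u v; split; last by move=> ->; apply: commutator_refl.
apply: commutator_min; first exact: eq_cong.
apply: cc2 => L HL.
have HL' : forall g, List.In g L -> g.1 = c1 -> size g.2.1 = size g.2.2.
  move=> g Hg E; have := HL g Hg; rewrite E /= => /comm11_perm.
  exact: Permutation_length.
elim: L {HL} HL' => [|[i [a b]] L IH] // HL E.
rewrite !FL_cons in E *.
have HL2 : forall g, List.In g L -> g.1 = c1 -> size g.2.1 = size g.2.2.
  by move=> g Hg; apply: HL; right.
case: (I2cases i) => Ei; subst i; rewrite /evg /pt2 /= in E *.
  by case: (cat_inj_size (erefl _) E) => _ /(IH HL2) ->.
have Hab : size a = size b by apply: (HL (c1, (a, b))) => //; left.
by case: (cat_inj_size Hab E) => -> /(IH HL2) ->.
Qed.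
Lemma gen_comm_vu {S : Type} (a0 : prel (seq S)) (u v : seq S) :
  a0 u v ->
  commutator (@cat S) (fun i : 'I_2 => nth a0 [:: a0; @total_cong _] i) (v ++ u) (u ++ v).
Proof.
move=> Ha.
have := @comm2_pair S (fun i : 'I_2 => nth a0 [:: a0; @total_cong _] i)
  (c1, ([::], u)) [:: (c0, (u, v)); (c1, (u, [::]))].
rewrite /FL /evg /pt2 /= !cats0; apply => //.
by move=> h [<-|[<-|[<-|[]]]] /=.
Qed.

Lemma rpow_nontriv {S : Type} (a b : S) : a <> b ->
  forall d, exists u v : seq S, [/\ size u = size v, u <> v & rpow (@cat S) d u v].
Proof.
move=> Hab; elim=> [|d [u [v [Hs Hne H]]]].
  by exists [:: a], [:: b]; split => // -[].
exists (v ++ u), (u ++ v); split.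
- by rewrite !size_cat addnC.
- by move=> /(cat_inj_size (esym Hs)) [E _]; apply: Hne.
- by apply: gen_comm_vu.
Qed.

Lemma all_eq_size {S : Type} (H : forall c e : S, c = e) (u v : seq S) :
  size u = size v -> u = v.
Proof.
elim: u v => [|c u IH] [|e v] //= [Hs].
by rewrite (H c e) (IH v Hs).
Qed.

Lemma part4 {S : Type} : right_nilpotent (@cat S) <-> card_le S 1.
Proof.
split.
  move=> [d Hd]; case: (classic (exists a b : S, a <> b)) => [[a [b Hab]]|Hn].
    case: (rpow_nontriv Hab d) => u [v [_ Hne H]].
    by case: Hne; apply/(Hd u v).
  exists (fun _ => ord0) => x y _; apply: NNPP => Hxy; apply: Hn.
  by exists x, y.
move=> [f Hf].
have Heq : forall c e : S, c = e by move=> c e; apply: Hf; rewrite (ord1 (f c)) (ord1 (f e)).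
exists 1 => u v; split; last by move=> ->; apply: commutator_refl.
move=> /= /comm11_perm /Permutation_length.
exact: all_eq_size.
Qed.
Definition synt (w0 : seq nat) (s t : seq nat) :=
  forall p q, (p ++ s ++ q == w0) = (p ++ t ++ q == w0).

Definition chk (w : seq nat) : bool :=
  all (fun i => all (fun lx => all (fun ly => all (fun lz =>
    let p := take i w in
    let w1 := drop i w in let X := take lx w1 in
    let w2 := drop lx w1 in let Y := take ly w2 in
    let w3 := drop ly w2 in let Z := take lz w3 in
    let q := drop lx (drop ly (drop lz w3)) in
    (p ++ X ++ Y ++ Z ++ Y ++ X ++ q != w) || (p ++ Y ++ X ++ Z ++ X ++ Y ++ q == w))
    (iota 0 (size w).+1)) (iota 0 (size w).+1)) (iota 0 (size w).+1)) (iota 0 (size w).+1).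

Lemma chkP w : chk w -> forall p X Y Z q,
  p ++ X ++ Y ++ Z ++ Y ++ X ++ q = w -> p ++ Y ++ X ++ Z ++ X ++ Y ++ q = w.
Proof.
move=> Hc p X Y Z q E.
have Hi : forall s : seq nat, size s <= size w -> size s \in iota 0 (size w).+1.
  by move=> s Hs; rewrite mem_iota /= add0n ltnS.
have Sw : size w = size p + (size X + (size Y + (size Z + (size Y + (size X + size q))))).
  by rewrite -E !size_cat.
move: Hc => /allP /(_ _ (Hi p ltac:(lia))) /allP /(_ _ (Hi X ltac:(lia)))
  /allP /(_ _ (Hi Y ltac:(lia))) /allP /(_ _ (Hi Z ltac:(lia))) /=.
rewrite -E.
rewrite take_size_cat // drop_size_cat // take_size_cat // drop_size_cat // take_size_cat // drop_size_cat // take_size_cat // drop_size_cat // drop_size_cat // drop_size_cat //.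
rewrite eqxx /=.
by move/eqP.
Qed.

Lemma synt_cong w0 : congruence (@cat nat) (synt w0).
Proof.
split.
- by move=> x p q.
- by move=> x y H p q; rewrite H.
- by move=> x y z H1 H2 p q; rewrite H1 H2.
- move=> x y u v H1 H2 p q.
  by rewrite -!catA H1 catA H2 -catA.
Qed.

Lemma synt_gen w0 : chk w0 -> forall X Y Z, synt w0 (X ++ Y ++ Z ++ Y ++ X) (Y ++ X ++ Z ++ X ++ Y).
Proof.
move=> Hc X Y Z p q; apply/eqP/eqP => E.
  by rewrite -!catA in E *; exact: (chkP Hc E).
by rewrite -!catA in E *; exact: (chkP Hc E).
Qed.

Lemma rho2_step {S : Type} (p x y z q s t : seq S) :
  s = p ++ (x ++ y ++ z ++ y ++ x) ++ q -> t = p ++ (y ++ x ++ z ++ x ++ y) ++ q ->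
  rho (@cat S) 2 s t.
Proof.
move=> -> ->.
have [Hr Hs Ht Hc] := cong_gen_cong (@cat S)
  (fun a b => exists x y (z : nat -> seq S), a = qq (@cat S) 1 x y z /\ b = qq (@cat S) 1 y x z).
apply: (Hc); first exact: Hr.
apply: (Hc); last exact: Hr.
apply: cong_gen_in; exists x, y, (fun _ => z); split; by rewrite /= -!catA.
Qed.

Lemma part3b {S : Type} : card_ge S 3 -> ~ cancellative (@cat S) (rho (@cat S) 2).
Proof.
move=> [f Hf] [Hr _].
pose g (s : S) : nat := val (epsilon (inhabits ord0) (fun i : 'I_3 => f i = s)).
have gf : forall i, g (f i) = val i.
  move=> i; rewrite /g; congr val; apply: Hf.
  by apply: (epsilon_spec (inhabits ord0) (fun j : 'I_3 => f j = f i)); exists i.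
pose a := f (@Ordinal 3 0 isT); pose b := f (@Ordinal 3 1 isT); pose c := f (@Ordinal 3 2 isT).
have H1 : rho (@cat S) 2 ([:: a; b; b; c; c; a; b] ++ [:: b]) ([:: b; c; a; a; b; b; c] ++ [:: b]).
  have [_ _ Ht _] := cong_gen_cong (@cat S)
    (fun a b => exists x y (z : nat -> seq S), a = qq (@cat S) 1 x y z /\ b = qq (@cat S) 1 y x z).
  apply: (Ht _ [:: c; a; b; b; a; b; b; c]).
    by apply: (@rho2_step S [::] [:: a; b; b] [:: c] [::] [::]).
  apply: (Ht _ [:: c; b; a; a; b; b; b; c]).
    by apply: (@rho2_step S [:: c] [:: a] [:: b] [::] [:: b; b; c]).
  by apply: (@rho2_step S [::] [:: c] [:: b] [:: a; a; b; b] [::]).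
have H2 := Hr _ _ _ H1.
have H3 : synt [:: 0; 1; 1; 2; 2; 0; 1] (map g [:: a; b; b; c; c; a; b]) (map g [:: b; c; a; a; b; b; c]).
  apply: (@cong_gen_min _ (@cat S) _ (fun s t => synt [:: 0; 1; 1; 2; 2; 0; 1] (map g s) (map g t)) _ _ _ _ H2).
    split.
    - by move=> x p q.
    - by move=> x y H p q; rewrite H.
    - by move=> x y z Ha Hb p q; rewrite Ha Hb.
    - move=> x y u v Ha Hb; rewrite !map_cat.
      by case: (synt_cong [:: 0; 1; 1; 2; 2; 0; 1]) => _ _ _; apply.
  move=> u v [x [y [z [-> ->]]]]; rewrite /= !map_cat -!catA.
  have := synt_gen (w0 := [:: 0; 1; 1; 2; 2; 0; 1]) _ (map g x) (map g y) (map g (z 1)).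
  by apply; vm_compute.
have := H3 [::] [::]; rewrite /= /a /b /c !gf /=.
by [].
Qed.
Definition na {S : Type} (h : S -> bool) (w : seq S) := count (predC h) w.
Definition nb {S : Type} (h : S -> bool) (w : seq S) := count h w.
Fixpoint NN {S : Type} (h : S -> bool) (w : seq S) : nat :=
  match w with [::] => 0 | c :: w' => (if h c then na h w' else 0) + NN h w' end.

Lemma na_cat {S} (h : S -> bool) u v : na h (u ++ v) = na h u + na h v.
Proof. exact: count_cat. Qed.
Lemma nb_cat {S} (h : S -> bool) u v : nb h (u ++ v) = nb h u + nb h v.
Proof. exact: count_cat. Qed.
Lemma na_cons {S} (h : S -> bool) c u : na h (c :: u) = ~~ h c + na h u.
Proof. by []. Qed.
Lemma nb_cons {S} (h : S -> bool) c u : nb h (c :: u) = h c + nb h u.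
Proof. by []. Qed.

Lemma NN_cons {S} (h : S -> bool) c u : NN h (c :: u) = (if h c then na h u else 0) + NN h u.
Proof. by []. Qed.

Lemma NN_cat {S} (h : S -> bool) u v : NN h (u ++ v) = NN h u + NN h v + nb h u * na h v.
Proof.
elim: u => [|c u IH]; first by rewrite /= mul0n addn0.
rewrite cat_cons !NN_cons IH na_cat nb_cons; case: (h c) => /=; lia.
Qed.

Lemma NN_bound {S} (h : S -> bool) u : NN h u <= nb h u * na h u.
Proof.
elim: u => [|c u IH] //; rewrite NN_cons nb_cons na_cons.
case: (h c) => /=; nia.
Qed.

Definition th {S : Type} (h : S -> bool) (u v : seq S) :=
  [/\ na h u = na h v, nb h u = nb h v & NN h u = NN h v].

Lemma th_cong {S} (h : S -> bool) : congruence (@cat S) (th h).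
Proof.
split.
- by move=> x.
- by move=> x y [? ? ?].
- by move=> x y z [? ? ?] [? ? ?]; split; congruence.
- move=> x y u v [A1 B1 N1] [A2 B2 N2].
  by split; rewrite ?na_cat ?nb_cat ?NN_cat; congruence.
Qed.

Lemma th_size {S} (h : S -> bool) u v : th h u v -> size u = size v.
Proof.
case=> A B _; rewrite -(count_predC h u) -(count_predC h v).
by move: A B; rewrite /na /nb => -> ->.
Qed.

Lemma th_cancel_l {S} (h : S -> bool) c u v : th h (c :: u) (c :: v) -> th h u v.
Proof.
case; rewrite !na_cons !nb_cons /= => A B N.
have A' : na h u = na h v by lia.
split => //; first by lia.
by move: N; rewrite A'; lia.
Qed.

Lemma th_cancel {S} (h : S -> bool) : cancellative (@cat S) (th h).
Proof.
split.
  move=> x y z; case; rewrite !na_cat !nb_cat !NN_cat => A B N.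
  have A' : na h x = na h y by lia.
  have B' : nb h x = nb h y by lia.
  by split => //; move: N; rewrite B'; lia.
move=> x y z; case; rewrite !na_cat !nb_cat !NN_cat => A B N.
have A' : na h x = na h y by lia.
have B' : nb h x = nb h y by lia.
by split => //; move: N; rewrite A'; lia.
Qed.

Lemma rho2_th {S} (h : S -> bool) u v : rho (@cat S) 2 u v -> th h u v.
Proof.
apply: cong_gen_min; first exact: th_cong.
move=> a b [x [y [z [-> ->]]]] /=.
split; rewrite ?na_cat ?nb_cat ?NN_cat ?na_cat ?nb_cat; try lia.
Qed.

Lemma perm_count {S} (P : pred S) u v : Permutation u v -> count P u = count P v.
Proof.
elim=> //= [x l l' _ IH|x y l|l l' l'' _ IH1 _ IH2]; try lia.
Qed.
Lemma pt2_c0 p q : pt2 p q c0 = p. Proof. by rewrite /pt2 eqxx. Qed.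
Lemma pt2_c1 p q : pt2 p q c1 = q. Proof. by []. Qed.
Lemma pt3_e0 p q r : pt3 p q r e0 = p. Proof. by rewrite /pt3 eqxx. Qed.
Lemma pt3_e1 p q r : pt3 p q r e1 = q. Proof. by []. Qed.
Lemma pt3_e2 p q r : pt3 p q r e2 = r. Proof. by []. Qed.

Lemma sep2A {S : Type} (P : pred S) (L : seq ('I_2 * (seq S * seq S))) :
  (forall g, List.In g L -> g.1 = c0 -> count P g.2.1 = count P g.2.2) ->
  exists Y : bool -> nat, forall y, count P (FL L y) = Y (y c1).
Proof.
elim: L => [|[i [a b]] L IH] HL; first by exists (fun _ => 0).
case: IH => [g Hg|Y HY]; first by apply: HL; right.
case: (I2cases i) => Ei; subst i.
  have Hab : count P a = count P b by apply: (HL (c0, (a, b))) => //; left.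
  exists (fun q => count P a + Y q) => y.
  by rewrite FL_cons count_cat HY /evg /=; case: (y c0) => //; rewrite Hab.
exists (fun q => count P (if q then b else a) + Y q) => y.
by rewrite FL_cons count_cat HY /evg.
Qed.

Lemma sep2N {S : Type} (h : S -> bool) (L : seq ('I_2 * (seq S * seq S))) :
  (forall g, List.In g L -> g.1 = c0 ->
     na h g.2.1 = na h g.2.2 /\ nb h g.2.1 = nb h g.2.2) ->
  exists X Y : bool -> nat, forall y, NN h (FL L y) = X (y c0) + Y (y c1).
Proof.
elim: L => [|[i [a b]] L IH] HL; first by exists (fun _ => 0), (fun _ => 0).
have HL' : forall g, List.In g L -> g.1 = c0 ->
     na h g.2.1 = na h g.2.2 /\ nb h g.2.1 = nb h g.2.2.
  by move=> g Hg; apply: HL; right.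
case: (IH HL') => X [Y HXY].
case: (@sep2A S (predC h) L) => [g Hg E|YA HYA]; first by case: (HL' g Hg E).
case: (I2cases i) => Ei; subst i.
  have [_ Hab] : na h a = na h b /\ nb h a = nb h b by apply: (HL (c0, (a, b))) => //; left.
  exists (fun p => NN h (if p then b else a) + X p), (fun q => Y q + nb h a * YA q) => y.
  rewrite FL_cons NN_cat HXY /na HYA /evg /=.
  have -> : nb h (if y c0 then b else a) = nb h a by case: (y c0).
  lia.
exists X, (fun q => NN h (if q then b else a) + Y q + nb h (if q then b else a) * YA q) => y.
rewrite FL_cons NN_cat HXY /na HYA /evg /=.
lia.
Qed.

Lemma th_closed21 {S : Type} (h : S -> bool) :
  comm_closed (@cat S)
    (fun i : 'I_2 => nth (comm2 (@cat S) (@total_cong _) (@total_cong _))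
       [:: comm2 (@cat S) (@total_cong _) (@total_cong _); @total_cong _] i) (th h).
Proof.
apply: cc2 => L HL [A B N].
have HP : forall g, List.In g L -> g.1 = c0 -> Permutation g.2.1 g.2.2.
  by move=> g Hg E; have := HL g Hg; rewrite E /=; apply: comm11_perm.
case: (@sep2A S (predC h) L) => [g Hg E|YA HYA]; first by apply/perm_count/HP.
case: (@sep2A S h L) => [g Hg E|YB HYB]; first by apply/perm_count/HP.
case: (@sep2N S h L) => [g Hg E|X [Y HXY]].
  by split; apply/perm_count/HP.
move: A B N; rewrite /th /na /nb !HYA !HYB !HXY !pt2_c0 !pt2_c1 => A B N.
split; lia.
Qed.

Lemma sep3N {S : Type} (h : S -> bool) (L : seq ('I_3 * (seq S * seq S))) :
  exists X Y Z : bool -> bool -> nat, forall y,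
    NN h (FL L y) = X (y e0) (y e1) + Y (y e0) (y e2) + Z (y e1) (y e2).
Proof.
elim: L => [|[i [a b]] L [X [Y [Z HXY]]]].
  by exists (fun _ _ => 0), (fun _ _ => 0), (fun _ _ => 0).
case: (@sep3count S (predC h) L) => A [B [C HA]].
pose E p := nb h (if p then b else a).
pose M p := NN h (if p then b else a).
case: (I3cases i) => ->.
- exists (fun p q => M p + X p q + E p * A p + E p * B q),
    (fun p r => Y p r + E p * C r), Z => y.
  rewrite FL_cons NN_cat HXY -/(na h (FL L y)) /na HA /evg /= /E /M.
  rewrite !mulnDr; lia.
- exists (fun p q => X p q + E q * A p + M q + E q * B q), Y,
    (fun q r => Z q r + E q * C r) => y.
  rewrite FL_cons NN_cat HXY -/(na h (FL L y)) /na HA /evg /= /E /M.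
  rewrite !mulnDr; lia.
- exists X, (fun p r => Y p r + E r * A p + M r + E r * C r),
    (fun q r => Z q r + E r * B q) => y.
  rewrite FL_cons NN_cat HXY -/(na h (FL L y)) /na HA /evg /= /E /M.
  rewrite !mulnDr; lia.
Qed.

Lemma th_closed111 {S : Type} (h : S -> bool) :
  comm_closed (@cat S)
    (fun i : 'I_3 => nth (@total_cong _) [:: @total_cong _; @total_cong _; @total_cong _] i) (th h).
Proof.
apply: cc3 => L _ [A1 B1 N1] [A2 B2 N2] [A3 B3 N3].
case: (@sep3count S (predC h) L) => XA [YA [ZA HA]].
case: (@sep3count S h L) => XB [YB [ZB HB]].
case: (@sep3N S h L) => X [Y [Z HN]].
move: A1 B1 N1 A2 B2 N2 A3 B3 N3.
rewrite /th /na /nb !HA !HB !HN !pt3_e0 !pt3_e1 !pt3_e2 => *.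
split; lia.
Qed.

Lemma rho2_comm21 {S : Type} (u v : seq S) : rho (@cat S) 2 u v ->
  comm2 (@cat S) (comm2 (@cat S) (@total_cong _) (@total_cong _)) (@total_cong _) u v.
Proof.
apply: cong_gen_min; first exact: commutator_cong.
move=> a b [x [y [z [-> ->]]]] /=.
have := @comm2_pair S (fun i : 'I_2 => nth (comm2 (@cat S) (@total_cong _) (@total_cong _))
       [:: comm2 (@cat S) (@total_cong _) (@total_cong _); @total_cong _] i)
  (c1, ([::], y ++ x ++ z 1)) [:: (c0, (y ++ x, x ++ y)); (c1, (z 1 ++ y ++ x, [::]))].
rewrite /FL /evg /pt2 /= !cats0 -!catA; apply.
  move=> g [<-|[<-|[<-|[]]]] //=.
  by apply: gen_comm11.
by rewrite -?catA.
Qed.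

Lemma rho2_comm111 {S : Type} (u v : seq S) : rho (@cat S) 2 u v ->
  comm3 (@cat S) (@total_cong _) (@total_cong _) (@total_cong _) u v.
Proof.
apply: cong_gen_min; first exact: commutator_cong.
move=> a b [x [y [z [-> ->]]]] /=.
have := @comm3_pair S (fun i : 'I_3 => nth (@total_cong _) [:: @total_cong _; @total_cong _; @total_cong _] i)
  (e2, ([::], y ++ x ++ z 1))
  [:: (e0, (y, [::])); (e1, ([::], x)); (e0, ([::], y)); (e1, (x, [::])); (e2, (z 1 ++ y ++ x, [::]))].
rewrite /FL /evg /pt3 /= !cats0 -!catA; apply.
- by move=> g [<-|[<-|[<-|[<-|[<-|[<-|[]]]]]]].
- by rewrite -?catA.
- by [].
- by [].
Qed.
Lemma rho2_cong {S : Type} : congruence (@cat S) (rho (@cat S) 2).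
Proof. exact: cong_gen_cong. Qed.

Lemma cat_nseqS {S : Type} (x : S) s X : nseq s.+1 x ++ X = nseq s x ++ x :: X.
Proof. by elim: s => //= s ->. Qed.

Lemma NN_nseq {S} (h : S -> bool) n x : NN h (nseq n x) = 0.
Proof.
elim: n => //= n ->; rewrite addn0.
by case E: (h x) => //; rewrite /na count_nseq /= E.
Qed.

Lemma lead_b {S} (h : S -> bool) (Hinj : injective h) d (Hd : h d = true) v :
  0 < na h v -> exists s c v2, h c = false /\ v = nseq s d ++ c :: v2.
Proof.
elim: v => [|e v IH] //; rewrite na_cons.
case E: (h e) => /= Hv.
  have := IH Hv => -[s [c [v2 [Hc ->]]]].
  by exists s.+1, c, v2; split => //=; rewrite (Hinj e d) // E Hd.
by exists 0, e, v.
Qed.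

Lemma split_ab {S} (h : S -> bool) (Hinj : injective h) ta tb :
  h ta = false -> h tb = true -> forall v2 : seq S,
  (exists p q, v2 = p ++ ta :: tb :: q) \/ (exists q p, v2 = nseq q tb ++ nseq p ta).
Proof.
move=> Ha Hb; elim=> [|e r [[p [q ->]]|[q [p ->]]]].
- by right; exists 0, 0.
- by left; exists (e :: p), q.
case E: (h e).
  have -> : e = tb by apply: Hinj; rewrite E Hb.
  by right; exists q.+1, p.
have -> : e = ta by apply: Hinj; rewrite E Ha.
case: q => [|q].
  by right; exists 0, p.+1.
by left; exists [::], (nseq q tb ++ nseq p ta).
Qed.

Lemma KLcontra {S} (h : S -> bool) ta tb : h ta = false -> h tb = true ->
  forall s q p u1, ~ th h (ta :: u1) (nseq s tb ++ tb :: ta :: nseq q tb ++ nseq p ta).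
Proof.
move=> Ha Hb s q p u1 [].
rewrite !na_cat !nb_cat !NN_cat !na_cons !nb_cons !NN_cons !na_cat !nb_cat !NN_cat
  !NN_nseq /na /nb !count_nseq /= Ha Hb /=.
have := NN_bound h u1; rewrite /na /nb.
rewrite count_cat !count_nseq /= Ha Hb /=.
nia.
Qed.

Lemma KL {S} (h : S -> bool) (Hinj : injective h) ta tb :
  h ta = false -> h tb = true ->
  forall s v2 u1, th h (ta :: u1) (nseq s tb ++ tb :: ta :: v2) ->
  exists w, rho (@cat S) 2 (nseq s tb ++ tb :: ta :: v2) (ta :: w).
Proof.
move=> Ha Hb; have [Hr Hs Ht Hc] := @rho2_cong S.
have [tr ts tt tc] := th_cong h.
elim=> [|s IH] v2 u1 Hth.
  case: (split_ab Hinj Ha Hb v2) => [[p [q E]]|[q [p E]]]; last first.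
    by case: (@KLcontra S h ta tb Ha Hb 0 q p u1); rewrite -E.
  exists (tb :: p ++ tb :: ta :: q).
  by apply: (@rho2_step S [::] [:: tb] [:: ta] p q); rewrite ?E /= -?catA.
case: (split_ab Hinj Ha Hb v2) => [[p [q E]]|[q [p E]]]; last first.
  by case: (@KLcontra S h ta tb Ha Hb s.+1 q p u1); rewrite -E.
have Hst : rho (@cat S) 2 (nseq s.+1 tb ++ tb :: ta :: v2)
   (nseq s tb ++ tb :: ta :: (tb :: p ++ tb :: ta :: q)).
  apply: (@rho2_step S (nseq s.+1 tb) [:: tb] [:: ta] p q).
    by rewrite E /= -!catA.
  by rewrite cat_nseqS /= -!catA.
case: (IH (tb :: p ++ tb :: ta :: q) u1) => [|w Hw].
  by apply: (tt _ _ _ Hth); apply: rho2_th.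
by exists w; apply: (Ht _ _ _ Hst Hw).
Qed.

Lemma conn {S} (h : S -> bool) (Hinj : injective h) n :
  forall u v : seq S, size u <= n -> th h u v -> rho (@cat S) 2 u v.
Proof.
have [Hr Hs Ht Hc] := @rho2_cong S.
have [tr ts tt tc] := th_cong h.
elim: n => [|n IH] u v Hu Huv.
  case: u Hu Huv => // _ Huv; have Hv := th_size Huv.
  by case: v Huv Hv => // _ _; apply: Hr.
have mixed : forall c u1 d v1, size u1 <= n -> h c = false -> h d = true ->
    th h (c :: u1) (d :: v1) -> rho (@cat S) 2 (c :: u1) (d :: v1).
  move=> c u1 d v1 Hs1 Hcf Hdt Hth.
  have Hpos : 0 < na h (d :: v1).
    by case: Hth => <- _ _; rewrite na_cons Hcf.
  case: (lead_b Hinj Hdt Hpos) => s [c' [v2 [Hc' E]]].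
  have Ecc : c' = c by apply: Hinj; rewrite Hc' Hcf.
  subst c'.
  case: s E => [|s] E.
    by move: E => /= [Edc _]; move: Hdt; rewrite Edc Hcf.
  rewrite cat_nseqS in E.
  case: (@KL S h Hinj c d Hcf Hdt s v2 u1) => [|w Hw].
    by rewrite -E.
  rewrite E; rewrite E in Hth.
  have Hw' : th h (c :: u1) (c :: w) by apply: (tt _ _ _ Hth); apply: rho2_th.
  have H1 : rho (@cat S) 2 u1 w by apply: IH => //; apply: th_cancel_l Hw'.
  apply: (Ht _ (c :: w)); last by apply: Hs.
  by apply: (Hc [:: c] [:: c] u1 w) => //; apply: Hr.
case: u Hu Huv => [|c u1] Hu Huv.
  have Hv := th_size Huv; case: v Huv Hv => // _ _; exact: Hr.
case: v Huv => [|d v1] Huv; first by move: (th_size Huv).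
rewrite /= ltnS in Hu.
case Ec: (h c); case Ed: (h d).
- have Edc : d = c by apply: Hinj; rewrite Ec Ed.
  subst d; apply: (Hc [:: c] [:: c] u1 v1); first exact: Hr.
  by apply: IH => //; apply: th_cancel_l Huv.
- apply: Hs; apply: mixed => //.
    by have := th_size Huv => /= [[<-]].
  by apply: ts.
- by apply: mixed.
- have Edc : d = c by apply: Hinj; rewrite Ec Ed.
  subst d; apply: (Hc [:: c] [:: c] u1 v1); first exact: Hr.
  by apply: IH => //; apply: th_cancel_l Huv.
Qed.
Lemma part3a {S : Type} : card_le S 2 ->
  [/\ releq (rho (@cat S) 2) (comm2 (@cat S) (comm2 (@cat S) (@total_cong _) (@total_cong _)) (@total_cong _)),
      releq (comm2 (@cat S) (comm2 (@cat S) (@total_cong _) (@total_cong _)) (@total_cong _))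
            (comm3 (@cat S) (@total_cong _) (@total_cong _) (@total_cong _)) &
      cancellative (@cat S) (rho (@cat S) 2)].
Proof.
move=> [f Hf].
pose h (s : S) := val (f s) == 1.
have Hinj : injective h.
  move=> c d Hcd; apply: Hf; apply: val_inj; move: Hcd; rewrite /h.
  case: (f c) => [[|[|//]] ?]; case: (f d) => [[|[|//]] ?] //.
have C21 : forall u v, comm2 (@cat S) (comm2 (@cat S) (@total_cong _) (@total_cong _)) (@total_cong _) u v -> th h u v.
  by apply: commutator_min; [apply: th_cong|apply: th_closed21].
have C111 : forall u v, comm3 (@cat S) (@total_cong _) (@total_cong _) (@total_cong _) u v -> th h u v.
  by apply: commutator_min; [apply: th_cong|apply: th_closed111].
have Cn : forall u v, th h u v -> rho (@cat S) 2 u v.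
  by move=> u v; apply: (conn Hinj (n := size u)).
split.
- move=> u v; split; first exact: rho2_comm21.
  by move/C21/Cn.
- move=> u v; split.
    by move/C21/Cn/rho2_comm111.
  by move/C111/Cn/rho2_comm21.
- split.
    move=> x y z /(rho2_th h) H; apply: Cn.
    by apply: (proj1 (th_cancel h) x y z).
  move=> x y z /(rho2_th h) H; apply: Cn.
  by apply: (proj2 (th_cancel h) x y z).
Qed.

Theorem theorem4p8 (Sigma : Type) :
  let op := @cat Sigma in
  let one := @total_cong (seq Sigma) in
  [/\ releq (comm2 op one one) (rho op 1),
      releq (comm2 op one (comm2 op one one)) (@triv_cong (seq Sigma)),
      (card_le Sigma 2 ->
         [/\ releq (rho op 2) (comm2 op (comm2 op one one) one),
             releq (comm2 op (comm2 op one one) one) (comm3 op one one one) &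
             cancellative op (rho op 2)]),
      (card_ge Sigma 3 -> ~ cancellative op (rho op 2)) &
      (right_nilpotent op <-> card_le Sigma 1)].
Proof.
move=> op one; rewrite {}/op {}/one.
split.
- exact: part1.
- exact: part2.
- exact: part3a.
- exact: part3b.
- exact: part4.
Qed.
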